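(* Let $a$ be a positive integer, $\beta\in[0,1]$, and $r:=(\phi^{\beta/a}-1)/(\phi^{1/a}-1)$. For an integer $n>1$ write $\mathfrak F^{-1}(n^a)=m+p$ with $m\in\mathbb{N}$ and $p=\{\mathfrak F^{-1}(n^a)\}$, and let $P_n:=\#\{k\le n:\{\mathfrak F^{-1}(k^a)\}\le\beta\}/n$. Then $$P_n=\begin{cases}\dfrac{r+\phi^{p/a}-1}{\phi^{p/a}}+O(m\phi^{-m/a})&\text{if }0\le p\le\beta,\\[2mm]\dfrac{r+\phi^{\beta/a}-1}{\phi^{p/a}}+O(m\phi^{-m/a})&\text{if }\beta<p<1.\end{cases}$$ In particular $\limsup_n P_n=r\phi^{1/a-\beta/a}=\beta+O(1/a)$ and $\liminf_n P_n=r=\beta+O(1/a)$.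
   Context: $\phi$ is the golden ratio; $\mathfrak F(x)=\frac{\phi}{\sqrt5}(\phi^x+\phi^{-x}\cos(\pi x)\phi^{-2})$, increasing on $[1,\infty)$ with $\mathfrak F(n)=F_n$ where $F_1=1,F_2=2,F_{n+2}=F_{n+1}+F_n$; $\mathfrak F^{-1}$ is its inverse on $[1,\infty)$; $\{y\}$ denotes the fractional part. *)

(* Defs.v *)
From Stdlib Require Import Reals Lra List.
From Coquelicot Require Import Coquelicot.
Open Scope R_scope.

Definition phi : R := (1 + sqrt 5) / 2.

Definition Ffib (x : R) : R :=
  phi / sqrt 5 * (Rpower phi x + Rpower phi (- x) * cos (PI * x) * Rpower phi (-2)).

(** fractional part {y} = y - floor y  (Stdlib: Int_part = floor) *)
Definition fracp (y : R) : R := frac_part y.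

Definition rr (a : nat) (beta : R) : R :=
  (Rpower phi (beta / INR a) - 1) / (Rpower phi (1 / INR a) - 1).

Definition count_le (Finv : R -> R) (a : nat) (beta : R) (n : nat) : nat :=
  length (filter (fun k => if Rle_dec (fracp (Finv (INR k ^ a))) beta then true else false)
                 (seq 1 n)).

Definition Pn (Finv : R -> R) (a : nat) (beta : R) (n : nat) : R :=
  INR (count_le Finv a beta n) / INR n.

Definition mpart (Finv : R -> R) (a n : nat) : R := IZR (Int_part (Finv (INR n ^ a))).
Definition ppart (Finv : R -> R) (a n : nat) : R := fracp (Finv (INR n ^ a)).

Definition main_term (Finv : R -> R) (a : nat) (beta : R) (n : nat) : R :=
  let p := ppart Finv a n in
  if Rle_dec p beta
  then (rr a beta + Rpower phi (p / INR a) - 1) / Rpower phi (p / INR a)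
  else (rr a beta + Rpower phi (beta / INR a) - 1) / Rpower phi (p / INR a).

(* Main.v *)
Require Import Defs.
From Stdlib Require Import Reals Lra List Lia ZArith.
From Coquelicot Require Import Coquelicot.
Open Scope R_scope.

Definition L := ln phi.

Lemma sqrt5_bounds : 2.2 < sqrt 5 < 2.3.
Proof.
  split.
  - rewrite <- (sqrt_square 2.2) by lra. apply sqrt_lt_1; lra.
  - rewrite <- (sqrt_square 2.3) by lra. apply sqrt_lt_1; lra.
Qed.

Lemma phi_bounds : 1.6 < phi < 1.65.
Proof. unfold phi; destruct sqrt5_bounds; lra. Qed.

Lemma phi_pos : 0 < phi.
Proof. destruct phi_bounds; lra. Qed.

Lemma exp_le_inv (y : R) : y < 1 -> exp y <= / (1 - y).
Proof.
  intros Hy. pose proof (exp_ineq1_le (-y)).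
  assert (exp y * exp (-y) = 1) by (rewrite <- exp_plus; replace (y + -y) with 0 by ring; apply exp_0).
  pose proof (exp_pos y).
  apply (Rmult_le_reg_r (1 - y)); [lra|].
  rewrite Rinv_l by lra. nra.
Qed.

Lemma L_lb : 3/10 < L.
Proof.
  unfold L. rewrite <- (ln_exp (3/10)). apply ln_increasing. apply exp_pos.
  pose proof (exp_le_inv (3/10)). destruct phi_bounds.
  assert (/ (1 - 3/10) < 1.6).
  { replace (1 - 3/10) with (7/10) by field.
    apply (Rmult_lt_reg_r (7/10)); [lra|]. rewrite Rinv_l; lra. }
  lra.
Qed.

Lemma L_pos : 0 < L.
Proof. pose proof L_lb; lra. Qed.

Lemma exp_L : exp L = phi.
Proof. unfold L. apply exp_ln, phi_pos. Qed.

Lemma Rpower_phi x : Rpower phi x = exp (x * L).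
Proof. reflexivity. Qed.

Definition K := phi / sqrt 5.
Lemma K_pos : 0 < K.
Proof. unfold K. pose proof phi_pos. pose proof sqrt5_bounds. apply Rdiv_lt_0_compat; lra. Qed.

Lemma Ffib_eq x : Ffib x = K * exp (x*L) * (1 + exp (-(2*x+2)*L) * cos (PI*x)).
Proof.
  unfold Ffib, Rpower. fold L. unfold K.
  assert (exp (- x * L) * exp (-2 * L) = exp (x*L) * exp (-(2*x+2)*L)).
  { rewrite <- !exp_plus. f_equal. ring. }
  replace (exp (- x * L) * cos (PI * x) * exp (-2 * L)) with (exp (- x * L) * exp (-2 * L) * cos (PI * x)) by ring.
  rewrite H. ring.
Qed.

Definition Fd t := K * (L * exp (t*L) - exp (-2*L) * exp (-t*L) * (L * cos (PI*t) + PI * sin (PI*t))).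

Lemma Ffib_derive t : is_derive Ffib t (Fd t).
Proof.
  unfold Ffib, Rpower. fold L. auto_derive; [auto|]. unfold Fd, K. replace (-2) with (-(2)) by ring. ring.
Qed.

Lemma sin_nonpos_12 t : 1 <= t <= 2 -> sin (PI * t) <= 0.
Proof.
  intros Ht. replace (PI * t) with ((PI * t - PI) + PI) by ring.
  rewrite neg_sin. pose proof PI_RGT_0.
  assert (0 <= sin (PI * t - PI)); [|lra].
  apply sin_ge_0; nra.
Qed.

Lemma Fd_pos t : 1 < t -> 0 < Fd t.
Proof.
  intros Ht. unfold Fd. apply Rmult_lt_0_compat; [apply K_pos|].
  pose proof L_lb as HL. pose proof PI_RGT_0. pose proof PI_4.
  set (A := exp (t*L)). set (B := exp (-t*L)). set (D := exp (-2*L)).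
  assert (HAB : A * B = 1) by (unfold A, B; rewrite <- exp_plus; replace (t*L + -t*L) with 0 by ring; apply exp_0).
  assert (HA1 : 1 < A) by (unfold A; rewrite <- exp_0; apply exp_increasing; nra).
  assert (HB : 0 < B) by apply exp_pos.
  assert (HD : 0 < D) by apply exp_pos.
  assert (HD1 : D * (phi * phi) = 1).
  { unfold D. rewrite <- exp_L. rewrite <- !exp_plus. rewrite <- exp_0. f_equal. ring. }
  pose proof phi_bounds.
  pose proof (COS_bound (PI * t)) as [_ Hc]. pose proof (SIN_bound (PI*t)) as [_ Hs].
  destruct (Rle_dec t 2) as [Ht2|Ht2].
  - pose proof (sin_nonpos_12 t ltac:(lra)).
    assert (L * cos (PI*t) + PI * sin (PI*t) <= L) by nra.
    assert (2.56 < phi * phi) by nra.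
    assert (D < 1) by (set (pp := phi*phi) in *; nra). assert (B < 1) by (apply (Rmult_lt_reg_l A); [lra|]; rewrite HAB; lra).
    assert (D * B * (L * cos (PI * t) + PI * sin (PI * t)) <= D * B * L).
    { apply Rmult_le_compat_l; [nra|lra]. }
    assert (D * B < 1) by (assert (D*B < 1*1) by (apply Rmult_le_0_lt_compat; lra); lra).
    assert (D * B * L < L * A) by (assert (D*B*L < 1 * L) by (apply Rmult_lt_compat_r; lra); nra).
    lra.
  - assert (HA2 : phi * phi <= A).
    { unfold A. rewrite <- exp_L, <- exp_plus. apply exp_le_3 || idtac.
      left. apply exp_increasing. nra. }
    assert (L * cos (PI*t) + PI * sin (PI*t) <= L + 4) by nra.
    assert (D * B * (L * cos (PI * t) + PI * sin (PI * t)) <= D * B * (L+4)).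
    { apply Rmult_le_compat_l; [nra|lra]. }
    assert (Hp6 : 16 < phi * phi * (phi * phi) * (phi * phi)).
    { assert (2.56 < phi * phi) by nra. set (pp := phi*phi) in *.
      assert (6.5 < pp * pp) by nra. nra. }
    assert (L + 4 < L * (A * A * (phi*phi))).
    { set (pp := phi*phi) in *. assert (0 < pp) by nra.
      assert (pp*pp <= A * A) by (apply Rmult_le_compat; lra).
      assert (pp*pp*pp <= A*A*pp) by (apply Rmult_le_compat_r; lra).
      assert (16 < A*A*pp) by lra.
      assert (L * 16 < L * (A*A*pp)) by (apply Rmult_lt_compat_l; lra). lra. }
    assert (D * B * (L + 4) < L * A).
    { assert (D*B*(L+4) * (A * A * (phi*phi)) = (L+4) * A) .
      { transitivity ((L+4) * A * ((A*B) * (D * (phi*phi)))); [ring|]. rewrite HAB, HD1. ring. }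
      assert (0 < A * A * (phi*phi)) by nra. nra. }
    lra.
Qed.

Lemma Ffib_incr x y : 1 <= x -> x < y -> Ffib x < Ffib y.
Proof.
  intros Hx Hxy.
  destruct (MVT_cor2 Ffib Fd x y Hxy) as [c [Hc Hc2]].
  { intros c _. apply is_derive_Reals, Ffib_derive. }
  pose proof (Fd_pos c ltac:(lra)). nra.
Qed.

Lemma Ffib_le x y : 1 <= x -> 1 <= y -> (Ffib x <= Ffib y <-> x <= y).
Proof.
  intros Hx Hy. split; intros H.
  - destruct (Rle_dec x y); auto. pose proof (Ffib_incr y x Hy ltac:(lra)). lra.
  - destruct H. left; apply Ffib_incr; auto. subst; lra.
Qed.

Lemma exp_le x y : x <= y -> exp x <= exp y.
Proof. intros [H|H]; [left; apply exp_increasing; auto|subst; lra]. Qed.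

Lemma exp_le_iff x y : exp x <= exp y <-> x <= y.
Proof.
  split; [|apply exp_le]. intros H. destruct (Rle_dec x y); auto.
  pose proof (exp_increasing y x ltac:(lra)); lra.
Qed.

Lemma ln_le x y : 0 < x -> x <= y -> ln x <= ln y.
Proof. intros Hx [H|H]; [left; apply ln_increasing; auto|subst; lra]. Qed.

Lemma ln_le_iff x y : 0 < x -> 0 < y -> (ln x <= ln y <-> x <= y).
Proof.
  intros Hx Hy; split; [|apply ln_le; auto]. intros H. destruct (Rle_dec x y); auto.
  pose proof (ln_increasing y x Hy ltac:(lra)); lra.
Qed.

Lemma L_lt1 : L < 1.
Proof.
  unfold L. rewrite <- (ln_exp 1). apply ln_increasing. apply phi_pos.
  pose proof (exp_ineq1_le 1). pose proof phi_bounds. lra.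
Qed.

Definition e0 x := exp (-(2*x+2)*L).
Definition eps x := e0 x * cos (PI*x).

Lemma e0_pos x : 0 < e0 x.
Proof. apply exp_pos. Qed.

Lemma e0_small x : 1 <= x -> e0 x <= 1/2.
Proof.
  intros Hx. unfold e0. pose proof L_lb.
  assert (exp (-(2*x+2)*L) <= exp (-(1))).
  { apply exp_le. nra. }
  assert (exp (-(1)) <= /2).
  { pose proof (exp_ineq1_le 1).
    assert (exp 1 * exp (-(1)) = 1) by (rewrite <- exp_plus; replace (1 + - (1)) with 0 by ring; apply exp_0).
    pose proof (exp_pos (-(1))). apply (Rmult_le_reg_l 2); [lra|]. nra. }
  lra.
Qed.

Lemma e0_decr x y : x <= y -> e0 y <= e0 x.
Proof. intros H. unfold e0. apply exp_le. pose proof L_pos. nra. Qed.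

Lemma eps_bound x : Rabs (eps x) <= e0 x.
Proof.
  unfold eps. rewrite Rabs_mult. rewrite (Rabs_right (e0 x)) by (left; apply e0_pos).
  pose proof (e0_pos x). pose proof (COS_bound (PI*x)). 
  assert (Rabs (cos (PI*x)) <= 1) by (apply Rabs_le; lra). nra.
Qed.

Lemma Ffib_eq2 x : Ffib x = K * exp (x*L) * (1 + eps x).
Proof. rewrite Ffib_eq. reflexivity. Qed.

Lemma Ffib_pos x : 1 <= x -> 0 < Ffib x.
Proof.
  intros Hx. rewrite Ffib_eq2. pose proof (eps_bound x). pose proof (e0_small x Hx).
  apply Rabs_le_between in H. pose proof K_pos. pose proof (exp_pos (x*L)).
  apply Rmult_lt_0_compat; [apply Rmult_lt_0_compat; auto|]. destruct H; lra.
Qed.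

Definition sa (a : nat) := L / INR a.
Definition ca (a : nat) := exp (ln K / INR a).
Definition H (a : nat) x := exp (ln (Ffib x) / INR a).
Definition eta (a : nat) x := exp (ln (1 + eps x) / INR a) - 1.

Lemma INR_a_ge1 (a : nat) : (0 < a)%nat -> 1 <= INR a.
Proof. intros Ha. apply (le_INR 1). lia. Qed.

Lemma sa_pos a : (0 < a)%nat -> 0 < sa a.
Proof. intros Ha. unfold sa. pose proof (INR_a_ge1 a Ha). pose proof L_pos. apply Rdiv_lt_0_compat; lra. Qed.

Lemma sa_le_L a : (0 < a)%nat -> sa a <= L.
Proof.
  intros Ha. unfold sa. pose proof (INR_a_ge1 a Ha). pose proof L_pos.
  apply (Rmult_le_reg_r (INR a)); [lra|]. unfold Rdiv. rewrite Rmult_assoc, Rinv_l by lra. nra.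
Qed.

Lemma ca_pos a : 0 < ca a.
Proof. apply exp_pos. Qed.

Lemma H_eq a x : (0 < a)%nat -> 1 <= x -> H a x = ca a * exp (sa a * x) * (1 + eta a x).
Proof.
  intros Ha Hx. unfold H, ca, sa, eta. pose proof (INR_a_ge1 a Ha).
  pose proof (eps_bound x) as Heb. pose proof (e0_small x Hx). apply Rabs_le_between in Heb.
  rewrite Ffib_eq2. pose proof K_pos. pose proof (exp_pos (x*L)).
  rewrite !ln_mult; try lra; try (apply Rmult_lt_0_compat; lra).
  rewrite ln_exp. replace (1 + (exp (ln (1 + eps x) / INR a) - 1)) with (exp (ln (1 + eps x) / INR a)) by ring.
  rewrite <- !exp_plus. f_equal. field. lra.
Qed.

Lemma eta_bound a x : (0 < a)%nat -> 1 <= x -> Rabs (eta a x) <= e0 x.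
Proof.
  intros Ha Hx. unfold eta. pose proof (INR_a_ge1 a Ha) as Ha1.
  pose proof (eps_bound x) as Heb. pose proof (e0_small x Hx) as Hs. pose proof (e0_pos x) as Hp.
  apply Rabs_le_between in Heb. apply Rabs_le. set (e := eps x) in *.
  destruct (Rle_dec 0 e).
  - assert (H1 : 0 <= ln (1+e)) by (rewrite <- ln_1; apply ln_le; lra).
    assert (H2 : ln (1+e) / INR a <= ln (1+e)).
    { apply (Rmult_le_reg_r (INR a)); [lra|]. unfold Rdiv. rewrite Rmult_assoc, Rinv_l by lra. nra. }
    assert (H3 : 0 <= ln (1+e) / INR a) by (apply Rdiv_le_0_compat; lra).
    pose proof (exp_le _ _ H2) as H4. rewrite exp_ln in H4 by lra.
    pose proof (exp_le _ _ H3) as H5. rewrite exp_0 in H5. lra.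
  - assert (H1 : ln (1+e) <= 0) by (rewrite <- ln_1; apply ln_le; lra).
    assert (H2 : ln (1+e) <= ln (1+e) / INR a).
    { apply (Rmult_le_reg_r (INR a)); [lra|]. unfold Rdiv. rewrite Rmult_assoc, Rinv_l by lra. nra. }
    assert (H3 : ln (1+e) / INR a <= 0).
    { unfold Rdiv. assert (0 < / INR a) by (apply Rinv_0_lt_compat; lra). nra. }
    pose proof (exp_le _ _ H2) as H4. rewrite exp_ln in H4 by lra.
    pose proof (exp_le _ _ H3) as H5. rewrite exp_0 in H5. lra.
Qed.

Lemma H_approx a x : (0 < a)%nat -> 1 <= x -> Rabs (H a x - ca a * exp (sa a * x)) <= ca a.
Proof.
  intros Ha Hx. rewrite H_eq by auto.
  replace (ca a * exp (sa a * x) * (1 + eta a x) - ca a * exp (sa a * x)) with (ca a * (exp (sa a * x) * eta a x)) by ring.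
  rewrite Rabs_mult, Rabs_mult. rewrite (Rabs_right (ca a)) by (left; apply ca_pos).
  rewrite (Rabs_right (exp _)) by (left; apply exp_pos).
  pose proof (eta_bound a x Ha Hx). pose proof (ca_pos a).
  assert (exp (sa a * x) * e0 x <= 1).
  { unfold e0. rewrite <- exp_plus. rewrite <- exp_0. apply exp_le.
    pose proof (sa_le_L a Ha). pose proof (sa_pos a Ha). pose proof L_pos. nra. }
  assert (exp (sa a * x) * Rabs (eta a x) <= 1).
  { pose proof (exp_pos (sa a * x)). pose proof (Rabs_pos (eta a x)). nra. }
  nra.
Qed.

Lemma H_le a x y : (0 < a)%nat -> 1 <= x -> 1 <= y -> (H a x <= H a y <-> x <= y).
Proof.
  intros Ha Hx Hy. unfold H. rewrite exp_le_iff. pose proof (INR_a_ge1 a Ha).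
  rewrite <- (Ffib_le x y Hx Hy). rewrite <- (ln_le_iff (Ffib x) (Ffib y)) by (apply Ffib_pos; auto).
  split; intros Hl.
  - apply (Rmult_le_reg_r (/ INR a)); [apply Rinv_0_lt_compat; lra|]. exact Hl.
  - apply Rmult_le_compat_r; [left; apply Rinv_0_lt_compat; lra|]. exact Hl.
Qed.

Lemma H_pos a x : 0 < H a x.
Proof. apply exp_pos. Qed.

Definition Finv_ok (Finv : R -> R) := forall y, 1 <= y -> 1 <= Finv y /\ Ffib (Finv y) = y.

Definition T (Finv : R -> R) (a k : nat) := Finv (INR k ^ a).

Lemma T_spec Finv a k : Finv_ok Finv -> (0 < a)%nat -> (1 <= k)%nat ->
  1 <= T Finv a k /\ H a (T Finv a k) = INR k.
Proof.
  intros hF Ha Hk. unfold T.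
  assert (Hk1 : 1 <= INR k) by (apply (le_INR 1); lia).
  destruct (hF (INR k ^ a)) as [h1 h2]. { apply pow_R1_Rle; lra. }
  split; auto. unfold H. rewrite h2. rewrite ln_pow by lra.
  pose proof (INR_a_ge1 a Ha).
  replace (INR a * ln (INR k) / INR a) with (ln (INR k)) by (field; lra).
  apply exp_ln; lra.
Qed.

Lemma T_le_iff Finv a k t : Finv_ok Finv -> (0 < a)%nat -> (1 <= k)%nat -> 1 <= t ->
  (T Finv a k <= t <-> INR k <= H a t).
Proof.
  intros hF Ha Hk Ht. destruct (T_spec Finv a k hF Ha Hk) as [h1 h2].
  rewrite <- h2. rewrite H_le; auto; tauto.
Qed.

Lemma T_ge_iff Finv a k t : Finv_ok Finv -> (0 < a)%nat -> (1 <= k)%nat -> 1 <= t ->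
  (t <= T Finv a k <-> H a t <= INR k).
Proof.
  intros hF Ha Hk Ht. destruct (T_spec Finv a k hF Ha Hk) as [h1 h2].
  rewrite <- h2. rewrite H_le; auto; tauto.
Qed.

Lemma T_mono Finv a k l : Finv_ok Finv -> (0 < a)%nat -> (1 <= k)%nat -> (k <= l)%nat ->
  T Finv a k <= T Finv a l.
Proof.
  intros hF Ha Hk Hkl. destruct (T_spec Finv a l hF Ha ltac:(lia)) as [h1 h2].
  rewrite T_le_iff; auto. rewrite h2. apply le_INR; auto.
Qed.

Fixpoint sumR (f : nat -> R) (l : list nat) : R :=
  match l with nil => 0 | x :: l' => f x + sumR f l' end.

Lemma sumR_app f l1 l2 : sumR f (l1 ++ l2) = sumR f l1 + sumR f l2.
Proof. induction l1; simpl; [ring|rewrite IHl1; ring]. Qed.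

Lemma sumR_ext f g l : (forall k, In k l -> f k = g k) -> sumR f l = sumR g l.
Proof.
  induction l; simpl; intros Hfg; auto. rewrite Hfg by auto. rewrite IHl; auto.
Qed.

Lemma sumR_plus f g l : sumR (fun k => f k + g k) l = sumR f l + sumR g l.
Proof. induction l; simpl; [ring|rewrite IHl; ring]. Qed.

Lemma sumR_scal c f l : sumR (fun k => c * f k) l = c * sumR f l.
Proof. induction l; simpl; [ring|rewrite IHl; ring]. Qed.

Lemma sumR_swap (g : nat -> nat -> R) lk lj :
  sumR (fun k => sumR (fun j => g j k) lj) lk = sumR (fun j => sumR (fun k => g j k) lk) lj.
Proof.
  induction lk; simpl.
  - induction lj; simpl; auto. rewrite <- IHlj; ring.
  - rewrite IHlk. rewrite <- sumR_plus. reflexivity.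
Qed.

Lemma sumR_err f g l e : (forall k, In k l -> Rabs (f k - g k) <= e) ->
  Rabs (sumR f l - sumR g l) <= INR (length l) * e.
Proof.
  induction l; intros Hb; cbn [sumR length].
  - rewrite Rminus_0_r, Rabs_R0. simpl. lra.
  - replace (f a + sumR f l - (g a + sumR g l)) with ((f a - g a) + (sumR f l - sumR g l)) by ring.
    eapply Rle_trans; [apply Rabs_triang|].
    pose proof (Hb a (or_introl eq_refl)). pose proof (IHl (fun k h => Hb k (or_intror h))).
    rewrite S_INR. lra.
Qed.

Lemma sumR_zero f l : (forall j, In j l -> f j = 0) -> sumR f l = 0.
Proof. induction l; simpl; intros Hf; auto. rewrite Hf by auto. rewrite IHl; auto. ring. Qed.

Lemma sumR_single f s len i : (s <= i < s + len)%nat -> (forall j, j <> i -> f j = 0) ->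
  sumR f (seq s len) = f i.
Proof.
  revert s. induction len; intros s Hi Hf; [lia|]. simpl.
  destruct (Nat.eq_dec s i).
  - subst. assert (sumR f (seq (S i) len) = 0).
    { apply sumR_zero. intros j Hj. apply in_seq in Hj. apply Hf. lia. }
    lra.
  - rewrite Hf by auto. rewrite (IHlen (S s)) by (auto; lia). ring.
Qed.

Lemma count_sumR (f : nat -> bool) l :
  INR (length (filter f l)) = sumR (fun k => if f k then 1 else 0) l.
Proof.
  induction l; simpl; auto. destruct (f a); cbn [length]; rewrite <- IHl; auto.
  rewrite S_INR; ring. ring.
Qed.

Definition ind2 (A B : R) (k : nat) : R :=
  if Rle_dec A (INR k) then if Rle_dec (INR k) B then 1 else 0 else 0.

Lemma cnt_inv A B n : 0 < A -> A <= B ->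
  let c := sumR (ind2 A B) (seq 1 n) in
  (INR n < A -> c = 0) /\
  (A <= INR n <= B -> INR n - A < c <= INR n - A + 1) /\
  (B < INR n -> B - A - 1 < c <= B - A + 1).
Proof.
  intros HA HAB. induction n.
  - simpl. split; [auto|]. split; intros; lra.
  - cbv zeta in *. rewrite seq_S, sumR_app. cbn [sumR]. destruct IHn as [I1 [I2 I3]].
    set (c := sumR (ind2 A B) (seq 1 n)) in *.
    replace (1 + n)%nat with (S n) by lia.
    assert (Hv : (A <= INR (S n) <= B /\ ind2 A B (S n) = 1) \/
                 ((INR (S n) < A \/ B < INR (S n)) /\ ind2 A B (S n) = 0)).
    { unfold ind2. destruct (Rle_dec A (INR (S n))); [destruct (Rle_dec (INR (S n)) B)|]; 
      [left|right|right]; split; auto; lra. }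
    rewrite S_INR in *. pose proof (pos_INR n).
    destruct Hv as [[Hr Hv]|[Hr Hv]]; rewrite Hv;
    (destruct (Rlt_le_dec (INR n) A) as [h|h];
     [rewrite I1 by auto|destruct (Rle_dec (INR n) B) as [h'|h'];
        [specialize (I2 ltac:(lra))|specialize (I3 ltac:(lra))]]);
    (split; [intros; lra|split; intros; lra]).
Qed.

Lemma cnt_bound A B n : 0 < A -> A <= B -> A <= INR n ->
  Rabs (sumR (ind2 A B) (seq 1 n) - (Rmin (INR n) B - A)) <= 1.
Proof.
  intros HA HAB HAn. destruct (cnt_inv A B n HA HAB) as [_ [I2 I3]].
  apply Rabs_le. unfold Rmin. destruct (Rle_dec (INR n) B).
  - specialize (I2 ltac:(lra)). lra.
  - specialize (I3 ltac:(lra)). lra.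
Qed.

Lemma floor_nat y : 1 <= y -> exists i : nat, (1 <= i)%nat /\ IZR (Int_part y) = INR i /\ INR i <= y < INR i + 1.
Proof.
  intros Hy. destruct (base_Int_part y) as [h1 h2].
  assert (Hz : (1 <= Int_part y)%Z).
  { assert (Hq : 0 < IZR (Int_part y)) by lra. apply lt_IZR in Hq. lia. }
  exists (Z.to_nat (Int_part y)). rewrite INR_IZR_INZ, Z2Nat.id by lia.
  split; [lia|]. split; auto. lra.
Qed.

Lemma floor_unique (i j : nat) y : INR i <= y < INR i + 1 -> INR j <= y < INR j + 1 -> i = j.
Proof.
  intros Hi Hj.
  assert (Q1 : INR i < INR (j + 1)) by (rewrite plus_INR; simpl; lra).
  assert (Q2 : INR j < INR (i + 1)) by (rewrite plus_INR; simpl; lra).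
  apply INR_lt in Q1. apply INR_lt in Q2. lia.
Qed.

Lemma fracp_eq y (i : nat) : INR i <= y < INR i + 1 -> fracp y = y - INR i.
Proof.
  intros Hi. unfold fracp, frac_part.
  assert (Q : Int_part y = Z.of_nat i).
  { symmetry. apply Int_part_spec. rewrite <- INR_IZR_INZ. lra. }
  rewrite Q, <- INR_IZR_INZ. reflexivity.
Qed.

Definition indT Finv a beta (j k : nat) : R :=
  if Rle_dec (INR j) (T Finv a k) then if Rle_dec (T Finv a k) (INR j + beta) then 1 else 0 else 0.

Definition chi Finv a beta (k : nat) : R :=
  if Rle_dec (fracp (T Finv a k)) beta then 1 else 0.

Lemma count_chi Finv a beta n :
  INR (count_le Finv a beta n) = sumR (chi Finv a beta) (seq 1 n).
Proof.
  unfold count_le. rewrite count_sumR. apply sumR_ext. intros k _.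
  unfold chi, T. destruct (Rle_dec _ _); auto.
Qed.

Lemma chi_decomp Finv a beta n m k : Finv_ok Finv -> (0 < a)%nat -> 0 <= beta < 1 ->
  (1 <= k <= n)%nat -> T Finv a n < INR m + 1 ->
  chi Finv a beta k = sumR (fun j => indT Finv a beta j k) (seq 1 m).
Proof.
  intros hF Ha Hb Hk Hm.
  destruct (T_spec Finv a k hF Ha ltac:(lia)) as [hk1 _].
  pose proof (T_mono Finv a k n hF Ha ltac:(lia) ltac:(lia)) as Hkn.
  destruct (floor_nat _ hk1) as [i [Hi1 [_ Hi]]].
  assert (Him : (i <= m)%nat).
  { assert (Q : INR i < INR (m + 1)) by (rewrite plus_INR; simpl; lra). apply INR_lt in Q. lia. }
  rewrite (sumR_single _ 1 m i) by (lia ||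
    (intros j Hj; unfold indT; destruct (Rle_dec _ _); auto; destruct (Rle_dec _ _); auto;
     exfalso; apply Hj; apply (floor_unique j i (T Finv a k)); lra)).
  unfold indT, chi. rewrite (fracp_eq _ i Hi).
  destruct (Rle_dec (INR i) _); [|lra].
  destruct (Rle_dec (T Finv a k - INR i) beta); destruct (Rle_dec (T Finv a k) (INR i + beta)); auto; lra.
Qed.

Lemma block_count Finv a beta n j : Finv_ok Finv -> (0 < a)%nat -> 0 <= beta ->
  (1 <= j)%nat ->
  sumR (fun k => indT Finv a beta j k) (seq 1 n) = sumR (ind2 (H a (INR j)) (H a (INR j + beta))) (seq 1 n).
Proof.
  intros hF Ha Hb Hj. apply sumR_ext. intros k Hk. apply in_seq in Hk.
  assert (Hj1 : 1 <= INR j) by (apply (le_INR 1); lia).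
  unfold indT, ind2.
  destruct (Rle_dec (INR j) (T Finv a k)) as [h1|h1];
  destruct (Rle_dec (H a (INR j)) (INR k)) as [h2|h2];
  try (rewrite T_ge_iff in h1 by (auto; lia); tauto);
  try (rewrite <- T_ge_iff in h2 by (auto; lia); tauto).
  destruct (Rle_dec (T Finv a k) (INR j + beta)) as [h3|h3];
  destruct (Rle_dec (INR k) (H a (INR j + beta))) as [h4|h4]; auto;
  try (rewrite T_le_iff in h3 by (auto; first [lia|lra]); tauto);
  try (rewrite <- T_le_iff in h4 by (auto; first [lia|lra]); tauto).
Qed.

Lemma H_T Finv a n : Finv_ok Finv -> (0 < a)%nat -> (1 <= n)%nat -> H a (T Finv a n) = INR n.
Proof. intros. apply T_spec; auto. Qed.

Lemma H_diff_approx a x y : (0 < a)%nat -> 1 <= x -> 1 <= y ->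
  Rabs ((H a y - H a x) - (ca a * exp (sa a * y) - ca a * exp (sa a * x))) <= 2 * ca a.
Proof.
  intros Ha Hx Hy. pose proof (H_approx a x Ha Hx) as Q1. pose proof (H_approx a y Ha Hy) as Q2.
  replace ((H a y - H a x) - (ca a * exp (sa a * y) - ca a * exp (sa a * x))) with
    ((H a y - ca a * exp (sa a * y)) - (H a x - ca a * exp (sa a * x))) by ring.
  eapply Rle_trans; [apply Rabs_triang|]. rewrite Rabs_Ropp. lra.
Qed.

Lemma count_approx Finv a beta n m : Finv_ok Finv -> (0 < a)%nat -> 0 <= beta < 1 ->
  (1 <= n)%nat -> (1 <= m)%nat -> INR m <= T Finv a n < INR m + 1 ->
  Rabs (INR (count_le Finv a beta n) -
     (ca a * (exp (sa a * beta) - 1) * sumR (fun j => exp (sa a * INR j)) (seq 1 (m - 1))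
      + (ca a * exp (sa a * (INR m + Rmin (T Finv a n - INR m) beta)) - ca a * exp (sa a * INR m))))
  <= INR m * (1 + 2 * ca a).
Proof.
  intros hF Ha Hb Hn Hm Hx.
  set (x := T Finv a n) in *. set (s := sa a). set (c := ca a).
  pose proof (ca_pos a) as Hc. fold c in Hc. destruct Hx as [Hxl Hxr].
  assert (HHx : H a x = INR n) by (apply H_T; auto).
  destruct (T_spec Finv a n hF Ha Hn) as [Hx1 _]. fold x in Hx1.
  rewrite count_chi.
  rewrite (sumR_ext _ (fun k => sumR (fun j => indT Finv a beta j k) (seq 1 m)))
    by (intros k Hk; apply in_seq in Hk; apply chi_decomp with n; auto; first [lia|lra]).
  rewrite sumR_swap.
  rewrite (sumR_ext _ (fun j => sumR (ind2 (H a (INR j)) (H a (INR j + beta))) (seq 1 n)))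
    by (intros j Hj; apply in_seq in Hj; apply block_count; auto; first [lia|lra]).
  set (g := fun j : nat => Rmin (INR n) (H a (INR j + beta)) - H a (INR j)).
  assert (E1 : Rabs (sumR (fun j => sumR (ind2 (H a (INR j)) (H a (INR j + beta))) (seq 1 n)) (seq 1 m)
                     - sumR g (seq 1 m)) <= INR (length (seq 1 m)) * 1).
  { apply sumR_err. intros j Hj. apply in_seq in Hj. unfold g.
    assert (Hj1 : 1 <= INR j) by (apply (le_INR 1); lia).
    assert (Hjm : INR j <= INR m) by (apply le_INR; lia).
    apply cnt_bound. apply H_pos.
    apply H_le; auto; lra.
    rewrite <- HHx. apply H_le; auto; lra. }
  rewrite length_seq in E1.
  destruct m as [|m']; [lia|].
  rewrite !seq_S in *. rewrite !sumR_app in *. cbn [sumR] in *. replace (1 + m')%nat with (S m') in * by lia.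
  replace (S m' - 1)%nat with m' by lia.
  set (p := x - INR (S m')) in *.
  assert (Eg : g (S m') = H a (INR (S m') + Rmin p beta) - H a (INR (S m'))).
  { unfold g. f_equal. rewrite <- HHx. replace x with (INR (S m') + p) by (unfold p; ring).
    unfold Rmin. destruct (Rle_dec (H a (INR (S m') + p)) (H a (INR (S m') + beta))) as [h|h];
    destruct (Rle_dec p beta) as [h'|h']; auto.
    - apply H_le in h; auto. lra. pose proof (pos_INR m'); rewrite S_INR; unfold p in *; lra.
      pose proof (pos_INR m'); rewrite S_INR; lra.
    - exfalso. apply h. apply H_le; auto. rewrite S_INR; pose proof (pos_INR m'); unfold p in *; lra.
      rewrite S_INR; pose proof (pos_INR m'); lra. lra. }
  assert (E2 : sumR g (seq 1 m') = sumR (fun j => H a (INR j + beta) - H a (INR j)) (seq 1 m')).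
  { apply sumR_ext. intros j Hj. apply in_seq in Hj. unfold g. f_equal.
    assert (Hj1 : 1 <= INR j) by (apply (le_INR 1); lia).
    assert (Hjm : INR j + 1 <= INR (S m')) by (rewrite <- S_INR; apply le_INR; lia).
    apply Rmin_right. rewrite <- HHx. apply H_le; auto; lra. }
  assert (E3 : Rabs (sumR (fun j => H a (INR j + beta) - H a (INR j)) (seq 1 m')
                - sumR (fun j => c * exp (s * (INR j + beta)) - c * exp (s * INR j)) (seq 1 m'))
               <= INR (length (seq 1 m')) * (2 * c)).
  { apply sumR_err. intros j Hj. apply in_seq in Hj.
    assert (Hj1 : 1 <= INR j) by (apply (le_INR 1); lia).
    apply H_diff_approx; auto; lra. }
  rewrite length_seq in E3.
  assert (E4 : sumR (fun j => c * exp (s * (INR j + beta)) - c * exp (s * INR j)) (seq 1 m')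
               = c * (exp (s * beta) - 1) * sumR (fun j => exp (s * INR j)) (seq 1 m')).
  { rewrite <- sumR_scal. apply sumR_ext. intros j _.
    replace (s * (INR j + beta)) with (s * INR j + s * beta) by ring. rewrite exp_plus. ring. }
  assert (E5 : Rabs ((H a (INR (S m') + Rmin p beta) - H a (INR (S m')))
                  - (c * exp (s * (INR (S m') + Rmin p beta)) - c * exp (s * INR (S m')))) <= 2 * c).
  { assert (Q : 1 <= INR (S m')) by (apply (le_INR 1); lia).
    apply H_diff_approx; auto. unfold Rmin; destruct (Rle_dec p beta); unfold p in *; lra. }
  rewrite Eg, E2 in E1. rewrite E4 in E3.
  rewrite S_INR in *.
  apply Rabs_le_between in E1. apply Rabs_le_between in E3. apply Rabs_le_between in E5.
  apply Rabs_le. pose proof (pos_INR m') as Q. split; nra.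
Qed.

Definition rS a beta := (exp (sa a * beta) - 1) / (exp (sa a) - 1).
Definition Mf a beta p := (rS a beta + exp (sa a * Rmin p beta) - 1) / exp (sa a * p).

Lemma Rpower_sa a x : (0 < a)%nat -> Rpower phi (x / INR a) = exp (sa a * x).
Proof.
  intros Ha. rewrite Rpower_phi. f_equal. unfold sa. pose proof (INR_a_ge1 a Ha). field. lra.
Qed.

Lemma rr_eq a beta : (0 < a)%nat -> rr a beta = rS a beta.
Proof. intros Ha. unfold rr, rS. rewrite !Rpower_sa by auto. rewrite Rmult_1_r. reflexivity. Qed.

Lemma es_gt1 a : (0 < a)%nat -> 1 < exp (sa a).
Proof. intros Ha. rewrite <- exp_0. apply exp_increasing. apply sa_pos; auto. Qed.

Lemma es_le_phi a : (0 < a)%nat -> exp (sa a) <= phi.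
Proof. intros Ha. rewrite <- exp_L. apply exp_le. apply sa_le_L; auto. Qed.

Lemma rS_id a beta : (0 < a)%nat -> rS a beta * (exp (sa a) - 1) = exp (sa a * beta) - 1.
Proof. intros Ha. unfold rS. pose proof (es_gt1 a Ha). field. lra. Qed.

Lemma rS_bounds a beta : (0 < a)%nat -> 0 <= beta <= 1 -> 0 <= rS a beta <= 1.
Proof.
  intros Ha Hb. pose proof (es_gt1 a Ha). pose proof (sa_pos a Ha).
  pose proof (rS_id a beta Ha).
  assert (1 <= exp (sa a * beta)) by (rewrite <- exp_0; apply exp_le; nra).
  assert (exp (sa a * beta) <= exp (sa a)) by (apply exp_le; nra).
  split; nra.
Qed.

Lemma main_term_Mf Finv a beta n : (0 < a)%nat ->
  main_term Finv a beta n = Mf a beta (ppart Finv a n).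
Proof.
  intros Ha. unfold main_term, Mf. rewrite rr_eq by auto. rewrite !Rpower_sa by auto.
  unfold Rmin. destruct (Rle_dec _ _); reflexivity.
Qed.

Lemma Mf_01 a beta p : (0 < a)%nat -> 0 <= beta <= 1 -> 0 <= p -> 0 <= Mf a beta p <= 1.
Proof.
  intros Ha Hb Hp. unfold Mf. pose proof (rS_bounds a beta Ha Hb). pose proof (sa_pos a Ha).
  assert (1 <= exp (sa a * Rmin p beta)) by (rewrite <- exp_0; apply exp_le; unfold Rmin; destruct (Rle_dec p beta); nra).
  assert (exp (sa a * Rmin p beta) <= exp (sa a * p)) by (apply exp_le; unfold Rmin; destruct (Rle_dec p beta); nra).
  pose proof (exp_pos (sa a * p)).
  split.
  - apply Rdiv_le_0_compat; lra.
  - apply (Rmult_le_reg_r (exp (sa a * p))); auto. unfold Rdiv. rewrite Rmult_assoc, Rinv_l by lra. lra.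
Qed.

Lemma geom s m' : (exp s - 1) * sumR (fun j => exp (s * INR j)) (seq 1 m') = exp (s * INR (S m')) - exp s.
Proof.
  induction m'.
  - simpl. replace (s * 1) with s by ring. ring.
  - rewrite seq_S, sumR_app. cbn [sumR]. replace (1 + m')%nat with (S m') by lia.
    rewrite Rmult_plus_distr_l, IHm'. rewrite (S_INR (S m')).
    replace (s * (INR (S m') + 1)) with (s * INR (S m') + s) by ring. rewrite exp_plus. ring.
Qed.

Lemma H_lower a x : (0 < a)%nat -> 1 <= x -> ca a * exp (sa a * x) / 2 <= H a x.
Proof.
  intros Ha Hx. rewrite H_eq by auto. pose proof (eta_bound a x Ha Hx) as Q. pose proof (e0_small x Hx).
  apply Rabs_le_between in Q. pose proof (ca_pos a). pose proof (exp_pos (sa a * x)).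
  assert (0 < ca a * exp (sa a * x)) by (apply Rmult_lt_0_compat; auto). nra.
Qed.


Lemma err_bound Finv a beta n m : Finv_ok Finv -> (0 < a)%nat -> 0 <= beta < 1 ->
  (1 <= n)%nat -> (1 <= m)%nat -> INR m <= T Finv a n < INR m + 1 ->
  Rabs (Pn Finv a beta n - Mf a beta (T Finv a n - INR m))
   <= (2 * (1 + 5 * ca a) / ca a) * INR m * exp (- (sa a * INR m)).
Proof.
  intros hF Ha Hb Hn Hm Hx.
  pose proof (count_approx Finv a beta n m hF Ha Hb Hn Hm Hx) as HC.
  destruct m as [|m']; [lia|]. replace (S m' - 1)%nat with m' in HC by lia.
  pose proof (geom (sa a) m') as Hg.
  pose proof (rS_id a beta Ha) as Hr.
  pose proof (rS_bounds a beta Ha ltac:(lra)) as Hr01.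
  pose proof (es_le_phi a Ha) as Hes. pose proof phi_bounds as Hphi.
  pose proof (ca_pos a) as Hc. pose proof (sa_pos a Ha) as Hs.
  pose proof (Mf_01 a beta (T Finv a n - INR (S m')) Ha ltac:(lra) ltac:(lra)) as HM01.
  assert (Hnx : INR n = H a (INR (S m') + (T Finv a n - INR (S m')))) by (rewrite <- (H_T Finv a n hF Ha Hn); f_equal; ring).
  assert (Hx1 : 1 <= INR (S m') + (T Finv a n - INR (S m'))) by (pose proof (le_INR 1 (S m') ltac:(lia)); simpl in *; lra).
  pose proof (H_approx a _ Ha Hx1) as Ha1. rewrite <- Hnx in Ha1.
  pose proof (H_lower a _ Ha Hx1) as Hl1. rewrite <- Hnx in Hl1.
  unfold Mf in HM01 |- *.
  set (x := T Finv a n) in *. clearbody x.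
  set (s := sa a) in *. clearbody s.
  set (c := ca a) in *. clearbody c.
  set (r := rS a beta) in *. clearbody r.
  set (cnt := INR (count_le Finv a beta n)) in *.
  set (G := sumR (fun j => exp (s * INR j)) (seq 1 m')) in *.
  set (p := x - INR (S m')) in *. set (mu := Rmin p beta) in *.
  set (Q := exp (s * INR (S m'))) in *.
  assert (HQ : 1 <= Q) by (unfold Q; rewrite <- exp_0; apply exp_le; pose proof (pos_INR (S m')); nra).
  destruct Hx as [Hxl Hxr].
  assert (Hp : 0 <= p < 1) by (unfold p; lra).
  assert (Hmu : 0 <= mu <= p) by (unfold mu, Rmin; destruct (Rle_dec p beta); lra).
  set (Ep := exp (s * p)) in *. set (Emu := exp (s * mu)) in *.
  assert (HEp : 1 <= Ep) by (unfold Ep; rewrite <- exp_0; apply exp_le; nra).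
  assert (HEmu : 1 <= Emu) by (unfold Emu; rewrite <- exp_0; apply exp_le; nra).
  assert (E1 : exp (s * (INR (S m') + mu)) = Q * Emu) by (unfold Q, Emu; rewrite <- exp_plus; f_equal; ring).
  rewrite E1 in HC.
  set (M := (r + Emu - 1) / Ep) in *.
  assert (HM : M * Ep = r + Emu - 1) by (unfold M; field; lra).
  assert (E3 : exp (s * (INR (S m') + p)) = Q * Ep) by (unfold Q, Ep; rewrite <- exp_plus; f_equal; ring).
  rewrite E3 in Ha1, Hl1.
  assert (HX0 : c * (exp (s * beta) - 1) * G + (c * (Q * Emu) - c * Q) = c * Q * Ep * M - c * r * exp s).
  { rewrite <- Hr. replace (c * (r * (exp s - 1)) * G) with (c * r * ((exp s - 1) * G)) by ring.
    rewrite Hg. fold Q. replace (c * Q * Ep * M) with (c * Q * (M * Ep)) by ring. rewrite HM. ring. }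
  rewrite HX0 in HC.
  assert (HD : Rabs (cnt - M * INR n) <= INR (S m') * (1 + 5 * c)).
  { replace (cnt - M * INR n) with ((cnt - (c * Q * Ep * M - c * r * exp s)) - c * r * exp s - M * (INR n - c * (Q * Ep))) by ring.
    assert (Hcr : 0 <= c * r * exp s <= 2 * c).
    { split. apply Rmult_le_pos; [nra|left; apply exp_pos].
      assert (c * r <= c) by nra. assert (0 <= c * r) by nra. nra. }
    assert (HMn : Rabs (M * (INR n - c * (Q * Ep))) <= c).
    { rewrite Rabs_mult, (Rabs_right M) by lra. nra. }
    apply Rabs_le_between in HC. apply Rabs_le_between in HMn. apply Rabs_le.
    assert (1 <= INR (S m')) by (apply (le_INR 1); lia).
    split; nra. }
  assert (Hnpos : c * Q / 2 <= INR n).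
  { assert (Q <= Q * Ep) by nra. assert (c * Q <= c * (Q * Ep)) by (apply Rmult_le_compat_l; lra). lra. }
  assert (HcQ : 0 < c * Q) by nra.
  unfold Pn. fold cnt.
  replace (cnt / INR n - M) with ((cnt - M * INR n) / INR n) by (field; lra).
  unfold Rdiv at 1. rewrite Rabs_mult, Rabs_inv, (Rabs_right (INR n)) by lra. fold (Rdiv (Rabs (cnt - M * INR n)) (INR n)).
  assert (Hexp : exp (- (s * INR (S m'))) = / Q) by (unfold Q; rewrite exp_Ropp; reflexivity).
  rewrite Hexp.
  apply (Rmult_le_reg_r (INR n)); [lra|].
  unfold Rdiv at 1. rewrite Rmult_assoc, Rinv_l, Rmult_1_r by lra.
  eapply Rle_trans; [exact HD|].
  eapply Rle_trans; [|apply Rmult_le_compat_l; [|exact Hnpos]].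
  - right. field. split; lra.
  - assert (0 < / Q) by (apply Rinv_0_lt_compat; lra). pose proof (pos_INR (S m')).
    apply Rmult_le_pos; [apply Rmult_le_pos|lra]; [|lra].
    apply Rmult_le_pos; [lra|]. left; apply Rinv_0_lt_compat; lra.
Qed.

Lemma fracp_bounds y : 0 <= fracp y < 1.
Proof. unfold fracp, frac_part. destruct (base_Int_part y). lra. Qed.

Lemma Mf_one a p : (0 < a)%nat -> 0 <= p < 1 -> Mf a 1 p = 1.
Proof.
  intros Ha Hp. unfold Mf, rS. rewrite Rmult_1_r. pose proof (es_gt1 a Ha).
  rewrite Rmin_left by lra. pose proof (exp_pos (sa a * p)). field. lra.
Qed.

Lemma Pn_one Finv a n : (1 <= n)%nat -> Pn Finv a 1 n = 1.
Proof.
  intros Hn. unfold Pn. rewrite count_chi.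
  rewrite (sumR_ext _ (fun _ => 1)).
  - assert (Hs1 : forall s, sumR (fun _ => 1) (seq s n) = INR n).
    { clear Hn. induction n; intros s; simpl; auto. rewrite IHn. destruct n; simpl; ring. }
    rewrite Hs1. field. apply not_0_INR. lia.
  - intros k _. unfold chi. destruct (Rle_dec _ _) as [h|h]; auto. exfalso. apply h.
    pose proof (fracp_bounds (T Finv a k)). lra.
Qed.

Lemma Mf_range a beta p : (0 < a)%nat -> 0 <= beta <= 1 -> 0 <= p < 1 ->
  rS a beta <= Mf a beta p <= rS a beta * exp (sa a * (1 - beta)).
Proof.
  intros Ha Hb Hp. unfold Mf. pose proof (rS_id a beta Ha) as Hr. pose proof (rS_bounds a beta Ha Hb) as Hr01.
  pose proof (sa_pos a Ha) as Hs. pose proof (es_gt1 a Ha) as He.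
  set (s := sa a) in *. set (r := rS a beta) in *.
  assert (Hsb : exp (s * (1 - beta)) = exp s / exp (s * beta)).
  { replace (s * (1 - beta)) with (s + - (s * beta)) by ring. rewrite exp_plus, exp_Ropp. reflexivity. }
  rewrite Hsb. pose proof (exp_pos (s * p)). pose proof (exp_pos (s * beta)).
  unfold Rmin. destruct (Rle_dec p beta) as [h|h].
  - assert (exp (s * p) <= exp (s * beta)) by (apply exp_le; nra).
    assert (1 <= exp (s * p)) by (rewrite <- exp_0; apply exp_le; nra).
    split.
    + apply (Rmult_le_reg_r (exp (s * p))); auto. unfold Rdiv. rewrite Rmult_assoc, Rinv_l by lra. nra.
    + replace (r * (exp s / exp (s * beta))) with ((r * exp s) / exp (s * beta)) by (field; lra).
      replace (r * exp s) with (r + exp (s * beta) - 1) by lra.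
      assert ((r + exp (s * p) - 1) * exp (s * beta) <= (r + exp (s * beta) - 1) * exp (s * p)) by nra.
      apply (Rmult_le_reg_r (exp (s * p) * exp (s * beta))); [nra|].
      unfold Rdiv. replace ((r + exp (s * p) - 1) * / exp (s * p) * (exp (s * p) * exp (s * beta))) with
        ((r + exp (s * p) - 1) * exp (s * beta)) by (field; lra).
      replace ((r + exp (s * beta) - 1) * / exp (s * beta) * (exp (s * p) * exp (s * beta))) with
        ((r + exp (s * beta) - 1) * exp (s * p)) by (field; lra). lra.
  - assert (exp (s * beta) <= exp (s * p)) by (apply exp_le; nra).
    assert (exp (s * p) <= exp s) by (apply exp_le; nra).
    replace (r + exp (s * beta) - 1) with (r * exp s) by lra.
    split.
    + apply (Rmult_le_reg_r (exp (s * p))); auto. unfold Rdiv. rewrite Rmult_assoc, Rinv_l by lra. nra.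
    + replace (r * (exp s / exp (s * beta))) with ((r * exp s) / exp (s * beta)) by (field; lra).
      apply (Rmult_le_reg_r (exp (s * p) * exp (s * beta))); [nra|].
      unfold Rdiv. replace (r * exp s * / exp (s * p) * (exp (s * p) * exp (s * beta))) with
        (r * exp s * exp (s * beta)) by (field; lra).
      replace (r * exp s * / exp (s * beta) * (exp (s * p) * exp (s * beta))) with
        (r * exp s * exp (s * p)) by (field; lra).
      assert (0 <= r * exp s) by (apply Rmult_le_pos; lra). nra.
Qed.

Lemma Mf_near_beta a beta p d : (0 < a)%nat -> 0 <= beta <= 1 -> beta <= p < beta + d ->
  rS a beta * exp (sa a * (1 - beta)) - 2 * sa a * d <= Mf a beta p.
Proof.
  intros Ha Hb Hp. unfold Mf. pose proof (rS_id a beta Ha) as Hr. pose proof (rS_bounds a beta Ha Hb) as Hr01.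
  pose proof (sa_pos a Ha) as Hs. pose proof (es_gt1 a Ha) as He. pose proof (es_le_phi a Ha) as Hphi.
  pose proof phi_bounds as Hpb.
  set (s := sa a) in *. set (r := rS a beta) in *.
  rewrite Rmin_right by lra.
  replace (r + exp (s * beta) - 1) with (r * exp s) by lra.
  assert (E : r * exp s / exp (s * p) = r * exp (s * (1 - beta)) * exp (- (s * (p - beta)))).
  { replace (s * (1 - beta)) with (s + - (s * beta)) by ring. rewrite !exp_plus, !exp_Ropp.
    replace (s * (p - beta)) with (s * p + - (s * beta)) by ring. rewrite exp_plus, exp_Ropp.
    pose proof (exp_pos (s * beta)). pose proof (exp_pos (s * p)). field. lra. }
  rewrite E.
  assert (E2 : 1 - s * (p - beta) <= exp (- (s * (p - beta)))) by (pose proof (exp_ineq1_le (- (s * (p - beta)))); lra).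
  assert (E3 : exp (s * (1 - beta)) <= exp s) by (apply exp_le; nra).
  assert (E4 : 0 <= r * exp (s * (1 - beta)) <= 2) by (pose proof (exp_pos (s * (1 - beta))); split; nra).
  assert (E5 : s * (p - beta) <= s * d) by nra.
  assert (E6 : 0 <= s * (p - beta)) by nra.
  set (X := r * exp (s * (1 - beta))) in *. set (y := s * (p - beta)) in *.
  assert (X * (1 - y) <= X * exp (- y)) by (apply Rmult_le_compat_l; lra).
  assert (X * y <= 2 * y) by nra.
  nra.
Qed.

Lemma exp_small y : 0 <= y <= 1/2 -> exp y <= 1 + 2 * y.
Proof.
  intros Hy. pose proof (exp_le_inv y ltac:(lra)).
  assert (/ (1 - y) <= 1 + 2 * y).
  { apply (Rmult_le_reg_r (1 - y)); [lra|]. rewrite Rinv_l by lra. nra. }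
  lra.
Qed.

Lemma Mf_near_0 a beta p d : (0 < a)%nat -> 0 <= beta <= 1 -> 0 <= p < d -> sa a * d <= 1/2 ->
  Mf a beta p <= rS a beta + 2 * sa a * d.
Proof.
  intros Ha Hb Hp Hd. unfold Mf. pose proof (rS_bounds a beta Ha Hb) as Hr01.
  pose proof (sa_pos a Ha) as Hs.
  set (s := sa a) in *. set (r := rS a beta) in *.
  assert (Hmu : 0 <= Rmin p beta <= p) by (unfold Rmin; destruct (Rle_dec p beta); lra).
  assert (1 <= exp (s * Rmin p beta)) by (rewrite <- exp_0; apply exp_le; nra).
  assert (exp (s * Rmin p beta) <= exp (s * d)) by (apply exp_le; nra).
  assert (exp (s * d) <= 1 + 2 * (s * d)) by (apply exp_small; nra).
  assert (1 <= exp (s * p)) by (rewrite <- exp_0; apply exp_le; nra).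
  assert ((r + exp (s * Rmin p beta) - 1) / exp (s * p) <= r + exp (s * Rmin p beta) - 1).
  { apply (Rmult_le_reg_r (exp (s * p))); [lra|]. unfold Rdiv. rewrite Rmult_assoc, Rinv_l by lra. nra. }
  lra.
Qed.

Lemma limsup_crit (u v : nat -> R) hi :
  (forall e, 0 < e -> exists N, forall n, (N <= n)%nat -> Rabs (u n - v n) < e) ->
  (forall n, v n <= hi) ->
  (forall e, 0 < e -> forall N, exists n, (N <= n)%nat /\ hi - e < v n) ->
  is_LimSup_seq u (Finite hi).
Proof.
  intros Hc Hv Hd eps. pose proof (cond_pos eps) as He.
  destruct (Hc (eps/2) ltac:(lra)) as [N1 HN1]. split.
  - intros N. destruct (Hd (eps/2) ltac:(lra) (Nat.max N N1)) as [n [Hn1 Hn2]].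
    exists n. split; [lia|]. specialize (HN1 n ltac:(lia)). apply Rabs_lt_between in HN1. lra.
  - exists N1. intros n Hn. specialize (HN1 n Hn). apply Rabs_lt_between in HN1. specialize (Hv n). lra.
Qed.

Lemma liminf_crit (u v : nat -> R) lo :
  (forall e, 0 < e -> exists N, forall n, (N <= n)%nat -> Rabs (u n - v n) < e) ->
  (forall n, lo <= v n) ->
  (forall e, 0 < e -> forall N, exists n, (N <= n)%nat /\ v n < lo + e) ->
  is_LimInf_seq u (Finite lo).
Proof.
  intros Hc Hv Hd eps. pose proof (cond_pos eps) as He.
  destruct (Hc (eps/2) ltac:(lra)) as [N1 HN1]. split.
  - intros N. destruct (Hd (eps/2) ltac:(lra) (Nat.max N N1)) as [n [Hn1 Hn2]].
    exists n. split; [lia|]. specialize (HN1 n ltac:(lia)). apply Rabs_lt_between in HN1. lra.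
  - exists N1. intros n Hn. specialize (HN1 n Hn). apply Rabs_lt_between in HN1. specialize (Hv n). lra.
Qed.

Lemma T_large Finv a t : Finv_ok Finv -> (0 < a)%nat -> 1 <= t ->
  exists N, (1 <= N)%nat /\ forall n, (N <= n)%nat -> t <= T Finv a n.
Proof.
  intros hF Ha Ht. destruct (INR_unbounded (H a t)) as [N0 HN0].
  exists (Nat.max N0 1). split; [lia|]. intros n Hn.
  rewrite T_ge_iff by (auto; lia).
  assert (INR N0 <= INR n) by (apply le_INR; lia). lra.
Qed.

Lemma exp_neg_le y : 0 <= y -> exp (- y) <= / (1 + y).
Proof.
  intros Hy. rewrite exp_Ropp. apply Rinv_le_contravar; [lra|]. apply exp_ineq1_le.
Qed.

Lemma incr_small Finv a d0 : Finv_ok Finv -> (0 < a)%nat -> 0 < d0 ->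
  exists N, forall n, (N <= n)%nat -> T Finv a (S n) < T Finv a n + d0.
Proof.
  intros hF Ha Hd0.
  set (d := Rmin d0 1). assert (Hd : 0 < d <= 1 /\ d <= d0) by (unfold d, Rmin; destruct (Rle_dec d0 1); lra).
  pose proof (sa_pos a Ha) as Hs. pose proof (sa_le_L a Ha) as HsL. pose proof L_lt1 as HL1. pose proof L_pos as HL0.
  set (h := sa a * d). assert (Hh : 0 < h <= 1) by (unfold h; split; nra).
  destruct (T_large Finv a (1 + 4 / (h * L)) hF Ha) as [N2 [HN2 HT2]].
  { assert (0 < 4 / (h * L)) by (apply Rdiv_lt_0_compat; nra). lra. }
  destruct (INR_unbounded (8 / h)) as [N1 HN1].
  exists (Nat.max N1 N2). intros n Hn.
  destruct (Rlt_le_dec (T Finv a (S n)) (T Finv a n + d0)) as [ok|bad]; auto. exfalso.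
  set (x := T Finv a n) in *.
  assert (Hx : 1 + 4 / (h * L) <= x) by (apply HT2; lia).
  assert (Hx1 : 1 <= x) by (assert (0 < 4 / (h * L)) by (apply Rdiv_lt_0_compat; nra); lra).
  assert (Hn1 : (1 <= n)%nat) by lia.
  assert (Hnh : 8 < INR n * h).
  { assert (INR N1 <= INR n) by (apply le_INR; lia).
    assert (8 / h * h = 8) by (field; lra). nra. }
  assert (He : e0 x <= h / 8).
  { unfold e0. replace (- (2 * x + 2) * L) with (- ((2 * x + 2) * L)) by ring.
    eapply Rle_trans; [apply exp_neg_le; nra|].
    assert (4 / (h * L) * (h * L) = 4) by (field; nra).
    assert (8 / h <= 1 + (2 * x + 2) * L).
    { assert (8 / h = 2 * (4 / (h * L) * L)) by (field; nra). 
      assert (4 / (h * L) * L <= x * L) by (apply Rmult_le_compat_r; lra). nra. }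
    apply (Rmult_le_reg_r (1 + (2 * x + 2) * L)); [nra|]. rewrite Rinv_l by nra.
    assert (8 / h * h = 8) by (field; lra). nra. }
  pose proof (e0_pos x) as He0.
  assert (HHn : H a x = INR n) by (apply H_T; auto).
  assert (HHn1 : H a (T Finv a (S n)) = INR (S n)) by (apply H_T; auto).
  assert (Hxd : 1 <= x + d) by lra.
  assert (Hmono : H a (x + d) <= INR (S n)).
  { rewrite <- HHn1. apply H_le; auto; [|lra]. destruct (T_spec Finv a (S n) hF Ha ltac:(lia)); auto. }
  rewrite S_INR in Hmono.
  rewrite H_eq in Hmono, HHn by auto.
  pose proof (eta_bound a x Ha Hx1) as Hq0. pose proof (eta_bound a (x + d) Ha Hxd) as Hq1.
  pose proof (e0_decr x (x + d) ltac:(lra)) as Hdec.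
  apply Rabs_le_between in Hq0. apply Rabs_le_between in Hq1.
  replace (sa a * (x + d)) with (sa a * x + h) in Hmono by (unfold h; ring).
  rewrite exp_plus in Hmono.
  pose proof (exp_ineq1_le h) as Hg.
  set (Y := ca a * exp (sa a * x)) in *.
  assert (HY : 0 < Y) by (unfold Y; apply Rmult_lt_0_compat; [apply ca_pos|apply exp_pos]).
  set (e := e0 x) in *. set (g := exp h) in *.
  set (n' := INR n) in *.
  assert (A1 : n' <= Y * (1 + e)) by (rewrite <- HHn; apply Rmult_le_compat_l; lra).
  assert (A2 : Y * g * (1 - e) <= n' + 1).
  { eapply Rle_trans; [|exact Hmono]. replace (ca a * (exp (sa a * x) * g)) with (Y * g) by (unfold Y; ring).
    apply Rmult_le_compat_l; [nra|lra]. }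
  assert (A3 : Y * (1 + h) * (1 - e) <= Y * g * (1 - e)).
  { apply Rmult_le_compat_r; [lra|]. apply Rmult_le_compat_l; lra. }
  assert (A4 : n' * ((1 + h) * (1 - e)) <= Y * (1 + e) * ((1 + h) * (1 - e))).
  { apply Rmult_le_compat_r; [nra|lra]. }
  assert (A5 : (n' + 1) * (1 + e) >= Y * (1 + h) * (1 - e) * (1 + e)).
  { apply Rle_ge. apply Rmult_le_compat_r; lra. }
  assert (A6 : (n' + 1) * (1 + e) >= n' * ((1 + h) * (1 - e))) by nra.
  assert (A7 : n' * e <= n' * h / 8) by (pose proof (pos_INR n); unfold n'; nra).
  assert (A8 : n' * h * e <= n' * h / 8) by nra.
  nra.
Qed.

Lemma first_cross (f : nat -> R) tau N0 : f N0 < tau ->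
  forall k, tau <= f (N0 + k)%nat -> exists n, (N0 < n <= N0 + k)%nat /\ f (pred n) < tau /\ tau <= f n.
Proof.
  intros H0 k. induction k; intros Hk.
  - rewrite Nat.add_0_r in Hk. lra.
  - destruct (Rle_dec tau (f (N0 + k)%nat)) as [h|h].
    + destruct (IHk h) as [n [Hn1 Hn2]]. exists n. split; [lia|auto].
    + exists (N0 + S k)%nat. split; [lia|]. replace (pred (N0 + S k)) with (N0 + k)%nat by lia. split; lra.
Qed.

Lemma crossing Finv a theta d : Finv_ok Finv -> (0 < a)%nat -> 0 <= theta -> 0 < d -> theta + d <= 1 ->
  forall N, exists n, (N <= n)%nat /\ theta <= fracp (T Finv a n) < theta + d.
Proof.
  intros hF Ha Ht Hd Htd N.
  destruct (incr_small Finv a d hF Ha Hd) as [N1 HN1].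
  set (N' := Nat.max N (Nat.max N1 1)).
  destruct (T_spec Finv a N' hF Ha ltac:(lia)) as [HN'1 _].
  destruct (floor_nat _ HN'1) as [i [Hi1 [_ Hi]]].
  set (tau := INR (S i) + theta).
  assert (Htau : T Finv a N' < tau) by (unfold tau; rewrite S_INR; lra).
  destruct (T_large Finv a tau hF Ha) as [N2 [_ HN2]].
  { unfold tau. pose proof (le_INR 1 (S i) ltac:(lia)). simpl in *. lra. }
  destruct (first_cross (T Finv a) tau N' Htau (N2)) as [n [Hn1 [Hn2 Hn3]]].
  { apply HN2. lia. }
  exists n. split; [lia|].
  assert (Hn4 : T Finv a n < tau + d).
  { replace n with (S (pred n)) by lia. eapply Rlt_le_trans; [apply HN1; lia|].
    replace (S (pred n)) with n by lia. lra. }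
  rewrite (fracp_eq _ (S i)). unfold tau in *. lra.
  unfold tau in *. lra.
Qed.

Lemma m_exp_small s m : 0 < s -> 0 < m -> m * exp (- (s * m)) < 4 / (s * s * m).
Proof.
  intros Hs Hm.
  assert (E : exp (s * m) = exp (s * m / 2) * exp (s * m / 2)) by (rewrite <- exp_plus; f_equal; field).
  pose proof (exp_ineq1_le (s * m / 2)).
  assert (s * m / 2 < exp (s * m / 2)) by lra.
  assert (Hsm : 0 < s * m) by nra.
  assert (s * m / 2 * (s * m / 2) < exp (s * m)) by (rewrite E; apply Rmult_le_0_lt_compat; lra).
  rewrite exp_Ropp. pose proof (exp_pos (s * m)).
  apply (Rmult_lt_reg_r (exp (s * m) * (s * s * m))); [apply Rmult_lt_0_compat; nra|].
  replace (m * / exp (s * m) * (exp (s * m) * (s * s * m))) with (s * s * m * m) by (field; lra).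
  replace (4 / (s * s * m) * (exp (s * m) * (s * s * m))) with (4 * exp (s * m)) by (field; nra).
  nra.
Qed.

Lemma conv_err Finv a beta : Finv_ok Finv -> (0 < a)%nat -> 0 <= beta < 1 ->
  forall e, 0 < e -> exists N, forall n, (N <= n)%nat ->
    Rabs (Pn Finv a beta n - Mf a beta (ppart Finv a n)) < e.
Proof.
  intros hF Ha Hb e He.
  set (Cst := 2 * (1 + 5 * ca a) / ca a).
  pose proof (ca_pos a) as Hc. pose proof (sa_pos a Ha) as Hs.
  assert (HC : 0 < Cst) by (unfold Cst; apply Rdiv_lt_0_compat; lra).
  set (s := sa a) in *.
  set (t1 := 1 + 4 * Cst / (s * s * e)).
  assert (Ht1 : 0 < 4 * Cst / (s * s * e)) by (apply Rdiv_lt_0_compat; [lra|]; apply Rmult_lt_0_compat; nra).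
  destruct (T_large Finv a (t1 + 1) hF Ha ltac:(unfold t1; lra)) as [N [HN1 HN]].
  exists N. intros n Hn.
  destruct (T_spec Finv a n hF Ha ltac:(lia)) as [Hx1 _].
  destruct (floor_nat _ Hx1) as [i [Hi1 [_ Hi]]].
  specialize (HN n Hn).
  unfold ppart. fold (T Finv a n). rewrite (fracp_eq _ i Hi).
  eapply Rle_lt_trans; [apply (err_bound Finv a beta n i); auto; lia|]. fold Cst s.
  assert (Hit : t1 < INR i) by lra.
  assert (Hi0 : 0 < INR i) by (unfold t1 in Hit; lra).
  pose proof (m_exp_small s (INR i) Hs Hi0) as Hme.
  rewrite Rmult_assoc.
  eapply Rlt_le_trans; [apply Rmult_lt_compat_l; [exact HC|exact Hme]|].
  apply (Rmult_le_reg_r (s * s * INR i)); [apply Rmult_lt_0_compat; nra|].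
  replace (Cst * (4 / (s * s * INR i)) * (s * s * INR i)) with (4 * Cst) by (field; nra).
  assert (4 * Cst / (s * s * e) * (s * s * e) = 4 * Cst) by (field; nra).
  assert (4 * Cst / (s * s * e) * (s * s * e) <= INR i * (s * s * e)) by (apply Rmult_le_compat_r; [nra|unfold t1 in Hit; lra]).
  nra.
Qed.

Lemma exp_ge1 y : 0 <= y -> 1 <= exp y.
Proof. intros. pose proof (exp_ineq1_le y). lra. Qed.

Lemma part2 a beta : (0 < a)%nat -> 0 <= beta <= 1 ->
  Rabs (rS a beta * exp (sa a * (1 - beta)) - beta) <= 2 * sa a /\ Rabs (rS a beta - beta) <= 2 * sa a.
Proof.
  intros Ha Hb. pose proof (rS_id a beta Ha) as Hr. pose proof (rS_bounds a beta Ha Hb) as Hr01.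
  pose proof (sa_pos a Ha) as Hs. pose proof (es_gt1 a Ha) as He. pose proof (es_le_phi a Ha) as Hphi.
  pose proof phi_bounds as Hpb.
  set (s := sa a) in *. set (r := rS a beta) in *.
  assert (Hsb : 0 <= s * beta <= s) by nra.
  assert (Hii : exp (s * beta) - 1 <= s * beta * exp (s * beta)).
  { pose proof (exp_ineq1_le (- (s * beta))).
    assert (exp (s * beta) * exp (- (s * beta)) = 1) by (rewrite <- exp_plus; replace (s * beta + - (s * beta)) with 0 by ring; apply exp_0).
    pose proof (exp_pos (s * beta)). nra. }
  assert (Hiii : s <= exp s - 1) by (pose proof (exp_ineq1_le s); lra).
  assert (Hsb1 : s * beta <= exp (s * beta) - 1) by (pose proof (exp_ineq1_le (s * beta)); lra).
  assert (Hes : exp s - 1 <= s * exp s).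
  { pose proof (exp_ineq1_le (- s)).
    assert (exp s * exp (- s) = 1) by (rewrite <- exp_plus; replace (s + - s) with 0 by ring; apply exp_0).
    pose proof (exp_pos s). nra. }
  assert (Hebs : 1 <= exp (s * beta)) by (rewrite <- exp_0; apply exp_le; lra).
  assert (Hebs2 : exp (s * beta) <= exp s) by (apply exp_le; lra).
  assert (Hup : r <= beta * exp (s * beta)).
  { assert (r * (exp s - 1) <= beta * exp (s * beta) * (exp s - 1)).
    { rewrite Hr. assert (0 <= beta * exp (s * beta)) by nra. nra. }
    apply (Rmult_le_reg_r (exp s - 1)); lra. }
  assert (Hlo : beta - s <= r).
  { assert (beta * s <= r * (exp s - 1)) by nra.
    assert (r * (exp s - 1) <= r * (s * exp s)) by (apply Rmult_le_compat_l; lra).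
    assert (beta * s <= r * s * exp s) by nra.
    assert (beta <= r * exp s) by (apply (Rmult_le_reg_r s); lra).
    (* r >= beta e^{-s} >= beta (1 - s) *)
    pose proof (exp_ineq1_le (- s)).
    assert (exp s * exp (- s) = 1) by (rewrite <- exp_plus; replace (s + - s) with 0 by ring; apply exp_0).
    assert (beta * exp (- s) <= r) by (pose proof (exp_pos (-s)); nra).
    nra. }
  assert (E1 : exp (s * beta) * exp (s * (1 - beta)) = exp s) by (rewrite <- exp_plus; f_equal; ring).
  assert (E2 : 1 <= exp (s * (1 - beta))) by (apply exp_ge1; apply Rmult_le_pos; lra).
  assert (Hb2 : beta * (exp s - 1) <= 2 * s) by nra.
  split; apply Rabs_le; split.
  - assert (r <= r * exp (s * (1 - beta))) by nra. lra.
  - assert (r * exp (s * (1 - beta)) <= beta * exp (s * beta) * exp (s * (1 - beta))).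
    { apply Rmult_le_compat_r; [lra|auto]. }
    nra.
  - lra.
  - assert (beta * exp (s * beta) <= beta * exp s) by (apply Rmult_le_compat_l; lra). nra.
Qed.

Theorem theorem4p10 (beta : R) (hb0 : 0 <= beta) (hb1 : beta <= 1) :
  (forall (a : nat), (0 < a)%nat ->
   forall (Finv : R -> R),
     (forall y, 1 <= y -> 1 <= Finv y /\ Ffib (Finv y) = y) ->
     (exists C : R, forall n : nat, (1 < n)%nat ->
        Rabs (Pn Finv a beta n - main_term Finv a beta n)
          <= C * mpart Finv a n * Rpower phi (- mpart Finv a n / INR a))
     /\ is_LimSup_seq (Pn Finv a beta)
          (Finite (rr a beta * Rpower phi (1 / INR a - beta / INR a)))
     /\ is_LimInf_seq (Pn Finv a beta) (Finite (rr a beta)))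
  /\
  (exists C : R, forall (a : nat), (0 < a)%nat ->
     Rabs (rr a beta * Rpower phi (1 / INR a - beta / INR a) - beta) <= C / INR a
     /\ Rabs (rr a beta - beta) <= C / INR a).
Proof.
  split.
  - intros a Ha Finv hF0.
    assert (hF : Finv_ok Finv) by exact hF0.
    assert (Hpow : Rpower phi (1 / INR a - beta / INR a) = exp (sa a * (1 - beta))).
    { rewrite Rpower_phi. f_equal. unfold sa. pose proof (INR_a_ge1 a Ha). field. lra. }
    rewrite Hpow, rr_eq by auto.
    assert (Hv : forall n, 0 <= ppart Finv a n < 1) by (intros; apply fracp_bounds).
    pose proof (sa_pos a Ha) as Hs. pose proof (sa_le_L a Ha) as HsL. pose proof L_lt1 as HL1.
    destruct (Rlt_le_dec beta 1) as [Hb1|Hb1].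
    + split; [|split].
      * exists (2 * (1 + 5 * ca a) / ca a). intros n Hn.
        destruct (T_spec Finv a n hF Ha ltac:(lia)) as [Hx1 _].
        destruct (floor_nat _ Hx1) as [i [Hi1 [Hi2 Hi]]].
        assert (Hm : mpart Finv a n = INR i) by exact Hi2.
        rewrite Hm, main_term_Mf by auto.
        unfold ppart. fold (T Finv a n). rewrite (fracp_eq _ i Hi).
        assert (Hp : Rpower phi (- INR i / INR a) = exp (- (sa a * INR i))).
        { rewrite Rpower_phi. f_equal. unfold sa. pose proof (INR_a_ge1 a Ha). field. lra. }
        rewrite Hp. apply err_bound; auto; lia.
      * apply limsup_crit with (v := fun n => Mf a beta (ppart Finv a n)).
        -- apply conv_err; auto.
        -- intros n. apply Mf_range; auto.
        -- intros e He N.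
           set (d := Rmin (1 - beta) (e / (4 * sa a))).
           assert (Hd : 0 < d /\ d <= 1 - beta /\ d <= e / (4 * sa a)).
           { unfold d, Rmin. assert (0 < e / (4 * sa a)) by (apply Rdiv_lt_0_compat; lra).
             destruct (Rle_dec _ _); lra. }
           destruct (crossing Finv a beta d hF Ha hb0 ltac:(lra) ltac:(lra) N) as [n [Hn1 Hn2]].
           exists n. split; auto.
           pose proof (Mf_near_beta a beta (ppart Finv a n) d Ha ltac:(lra) Hn2).
           assert (2 * sa a * d <= e / 2).
           { assert (e / (4 * sa a) * (4 * sa a) = e) by (field; lra). nra. }
           lra.
      * apply liminf_crit with (v := fun n => Mf a beta (ppart Finv a n)).
        -- apply conv_err; auto.
        -- intros n. apply Mf_range; auto.
        -- intros e He N.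
           set (d := Rmin (1/2) (e / (4 * sa a))).
           assert (Hd : 0 < d /\ d <= 1/2 /\ d <= e / (4 * sa a)).
           { unfold d, Rmin. assert (0 < e / (4 * sa a)) by (apply Rdiv_lt_0_compat; lra).
             destruct (Rle_dec _ _); lra. }
           destruct (crossing Finv a 0 d hF Ha ltac:(lra) ltac:(lra) ltac:(lra) N) as [n [Hn1 Hn2]].
           exists n. split; auto.
           pose proof (Mf_near_0 a beta (ppart Finv a n) d Ha ltac:(lra) ltac:(unfold ppart; fold (T Finv a n); lra) ltac:(nra)).
           assert (2 * sa a * d <= e / 2).
           { assert (e / (4 * sa a) * (4 * sa a) = e) by (field; lra). nra. }
           lra.
    + assert (Hb : beta = 1) by lra. subst beta.
      assert (Hr1 : rS a 1 = 1) by (unfold rS; rewrite Rmult_1_r; pose proof (es_gt1 a Ha); field; lra).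
      rewrite Hr1. replace (1 - 1) with 0 by ring. rewrite Rmult_0_r, exp_0, Rmult_1_r.
      assert (HP : forall n, (1 <= n)%nat -> Pn Finv a 1 n = 1) by (intros; apply Pn_one; auto).
      assert (HM : forall n, Mf a 1 (ppart Finv a n) = 1) by (intros; apply Mf_one; auto).
      assert (Hc : forall e, 0 < e -> exists N, forall n, (N <= n)%nat -> Rabs (Pn Finv a 1 n - 1) < e).
      { intros e He. exists 1%nat. intros n Hn. rewrite HP by auto. rewrite Rminus_diag, Rabs_R0. lra. }
      split; [|split].
      * exists 0. intros n Hn. rewrite main_term_Mf, HM, HP by (auto; lia).
        rewrite Rminus_diag, Rabs_R0. lra.
      * apply limsup_crit with (v := fun _ => 1); [exact Hc|intros; lra|].
        intros e He N. exists N. split; auto; lra.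
      * apply liminf_crit with (v := fun _ => 1); [exact Hc|intros; lra|].
        intros e He N. exists N. split; auto; lra.
  - exists (2 * L). intros a Ha.
    assert (Hpow : Rpower phi (1 / INR a - beta / INR a) = exp (sa a * (1 - beta))).
    { rewrite Rpower_phi. f_equal. unfold sa. pose proof (INR_a_ge1 a Ha). field. lra. }
    rewrite Hpow, rr_eq by auto.
    replace (2 * L / INR a) with (2 * sa a) by (unfold sa; pose proof (INR_a_ge1 a Ha); field; lra).
    apply part2; auto.
Qed.
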